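(* If a collection $\mathcal Q$ of probability measures on $\{0,1\}^{\mathbb N}$ is separable in its means, then $\mathcal Q$ is UME-learnable.
   Context: $\{0,1\}^{\mathbb N}$ carries the product $\sigma$-algebra. For a probability measure $\mu$ on $\{0,1\}^{\mathbb N}$, $\mathrm{Mean}(\mu)\in[0,1]^{\mathbb N}$ is the vector whose $j$-th coordinate is $\mathbb E[X_j]$ for $X\sim\mu$; $\mathrm{Mean}(\mathcal Q)=\{\mathrm{Mean}(\mu):\mu\in\mathcal Q\}$. For $\varepsilon>0$, a countable $\varepsilon$-cover of $\mathrm{Mean}(\mathcal Q)$ is a countable set $C\subset[0,1]^{\mathbb N}$ such that every $q\in\mathrm{Mean}(\mathcal Q)$ has some $p\in C$ with $\|q-p\|_\infty<\varepsilon$. $\mathcal Q$ is separable in its means if for every $\varepsilon>0$ a countable $\varepsilon$-cover of $\mathrm{Mean}(\mathcal Q)$ exists, and non-separable in its means otherwise. $\mathcal Q$ is UME-learnable if there exist (measurable) estimators $\mathcal A_n:(\{0,1\}^{\mathbb N})^n\to[0,1]^{\mathbb N}$, $n\in\mathbb N$, such that for every $\mu\in\mathcal Q$, $\mathbb E_{S\sim\mu^n}\|\mathcal A_n(S)-\mathrm{Mean}(\mu)\|_\infty\to0$ as $n\to\infty$, where $S$ consists of $n$ i.i.d. draws from $\mu$. *)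

(* Defs.v *)
From HB Require Import structures.
From mathcomp Require Import all_boot all_order all_algebra.
From mathcomp Require Import all_classical all_reals all_analysis.
Set Implicit Arguments. Unset Strict Implicit. Unset Printing Implicit Defensive.
Import Order.TTheory GRing.Theory Num.Theory.
Local Open Scope classical_set_scope.
Local Open Scope ring_scope.

Definition seq_space (T : Type) := nat -> T.

Definition seq_space_display : measure_display -> measure_display.
Proof. exact. Qed.

Section seq_space_measurable.
Context {d} {T : measurableType d}.

HB.instance Definition _ := Pointed.on (seq_space T).

Definition seq_space_measurable : set (set (seq_space T)) :=
  <<s \bigcup_(i in [set: nat])
        preimage_set_system [set: seq_space T] (fun x : seq_space T => x i)
          measurable >>.

Let ss0 : seq_space_measurable set0.
Proof. exact: sigma_algebra0. Qed.
Let ssC A : seq_space_measurable A -> seq_space_measurable (~` A).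
Proof. exact: sigma_algebraC. Qed.
Let ssU (F : _^nat) : (forall i, seq_space_measurable (F i)) ->
  seq_space_measurable (\bigcup_i (F i)).
Proof. exact: sigma_algebra_bigcup. Qed.

HB.instance Definition _ := @isMeasurable.Build (seq_space_display d)
  (seq_space T) seq_space_measurable ss0 ssC ssU.
End seq_space_measurable.

Definition Cantor := seq_space bool.

Section defs.
Context {R : realType}.
Local Open Scope ereal_scope.

Definition Mean (mu : probability Cantor R) : nat -> R :=
  fun j => fine (\int[mu]_x ((x j)%:R)%:E).

Definition supdist (q p : nat -> R) : \bar R :=
  ereal_sup [set (`|q j - p j|)%:E | j in [set: nat]].

Definition unit_cube : set (nat -> R) :=
  [set p | forall j, (0 <= p j <= 1)%R].

(* Expectation of a nonnegative function of an i.i.d. sample S ~ mu^n,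
   S = (x_1,...,x_n), defined as the iterated integral
   \int mu(dx_1) ... \int mu(dx_n) f(x_1,...,x_n)
   (= \int f d(mu^n) for measurable f >= 0, by Tonelli). *)
Fixpoint iid_expect (mu : probability Cantor R) (n : nat) :
    (n.-tuple Cantor -> \bar R) -> \bar R :=
  match n return (n.-tuple Cantor -> \bar R) -> \bar R with
  | 0 => fun f => f [tuple]
  | n'.+1 => fun f =>
      \int[mu]_x iid_expect mu (fun t : n'.-tuple Cantor => f [tuple of x :: t])
  end.

Definition separable_in_means (Q : set (probability Cantor R)) : Prop :=
  forall eps : R, (0 < eps)%R ->
    exists C : set (nat -> R),
      [/\ countable C, C `<=` unit_cube &
          forall mu, Q mu -> exists2 p, C p & supdist (Mean mu) p < eps%:E].

Definition UME_learnable (Q : set (probability Cantor R)) : Prop :=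
  exists A : forall n : nat, n.-tuple Cantor -> (nat -> R),
    [/\ (forall n, measurable_fun [set: n.-tuple Cantor]
                     (A n : n.-tuple Cantor -> seq_space R)),
        (forall n S, unit_cube (A n S)) &
        forall mu, Q mu ->
          (fun n => iid_expect mu (fun S => supdist (A n S) (Mean mu)))
            @ \oo --> 0].
End defs.

(* Main.v *)
Require Import Defs.
From HB Require Import structures.
From mathcomp Require Import all_boot all_order all_algebra.
From mathcomp Require Import all_classical all_reals all_analysis.
From mathcomp Require Import measurable_realfun.
From mathcomp Require Import ring lra zify.
Set Implicit Arguments. Unset Strict Implicit. Unset Printing Implicit Defensive.
Import Order.TTheory GRing.Theory Num.Theory.
Local Open Scope classical_set_scope.
Local Open Scope ring_scope.

Lemma cvg0_ereal (R : realType) (u : nat -> \bar R) : (forall n, (0 <= u n)%E) ->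
  (forall e : R, 0 < e -> exists N, forall n, (N <= n)%N -> (u n <= e%:E)%E) ->
  u @ \oo --> 0%E.
Proof.
move=> u0 H; apply/fine_cvgP; split.
  have [N HN] := H 1 ltr01.
  exists N => // n /= Nn; rewrite fin_numElt (lt_le_trans _ (u0 n)) ?ltNy0//=.
  exact: le_lt_trans (HN n Nn) (ltry _).
apply/cvgrPdist_le => e e0.
have [N HN] := H e e0.
exists N => // n /= Nn; rewrite sub0r normrN.
have := HN n Nn; have := u0 n.
case: (u n) => //= r; rewrite !lee_fin => r0 re.
by rewrite ger0_norm.
Qed.

Section amin.
Context {R : realType}.

Fixpoint amin (sc : nat -> R) (k : nat) : nat :=
  match k with
  | 0 => 0%N
  | k'.+1 => let i := amin sc k' in if sc k < sc i then k else i
  end.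

Lemma amin_le sc k : (amin sc k <= k)%N.
Proof.
elim: k => //= k IH; case: ifP => // _; exact: leqW.
Qed.

Lemma amin_min sc k l : (l <= k)%N -> sc (amin sc k) <= sc l.
Proof.
elim: k l => [|k IH] l /=; first by rewrite leqn0 => /eqP->.
rewrite leq_eqVlt => /orP[/eqP->|]; case: ifPn => h.
- by [].
- by rewrite leNgt.
- move=> lk; apply: le_trans (ltW h) (IH _ lk).
- by move=> lk; exact: IH.
Qed.

Lemma measurable_amin d (T : measurableType d) (sc h : nat -> T -> R) :
  (forall i, measurable_fun [set: T] (sc i)) ->
  (forall i, measurable_fun [set: T] (h i)) ->
  forall k, measurable_fun [set: T] (fun x => h (amin (sc^~ x) k) x).
Proof.
move=> msc mh k; elim: k h mh => [|k IH] h mh //=.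
rewrite (_ : (fun x => _) = (fun x => if sc k.+1 x < sc (amin (sc^~ x) k) x
   then h k.+1 x else h (amin (sc^~ x) k) x)); last first.
  by apply: funext => x; case: ifP.
apply: measurable_fun_ifT; last 2 first.
- exact: mh.
- exact: IH.
apply: measurable_fun_ltr; first exact: msc.
exact: (IH sc msc).
Qed.

Lemma measurable_bigmax d (T : measurableType d) (s : seq nat) (f : nat -> T -> R) :
  (forall j, measurable_fun [set: T] (f j)) ->
  measurable_fun [set: T] (fun x => \big[Num.max/0]_(j <- s) f j x).
Proof.
move=> mf; elim: s => [|j s IH].
  under eq_fun do rewrite big_nil; exact: measurable_cst.
under eq_fun do rewrite big_cons.
exact: measurable_maxr.
Qed.

Lemma le_bigmaxr_s (s : seq nat) (F : nat -> R) j : j \in s ->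
  F j <= \big[Num.max/0]_(k <- s) F k.
Proof.
elim: s => // x s IH; rewrite in_cons big_cons => /orP[/eqP->|js].
  by rewrite le_max lexx.
by rewrite le_max IH ?orbT.
Qed.

Lemma bigmaxr_s_le (s : seq nat) (F : nat -> R) c : 0 <= c ->
  (forall j, j \in s -> F j <= c) -> \big[Num.max/0]_(k <- s) F k <= c.
Proof.
move=> c0; elim: s => [|x s IH] H; first by rewrite big_nil.
rewrite big_cons ge_max H ?mem_head//= IH// => j js; apply: H.
by rewrite in_cons js orbT.
Qed.

Lemma bigmaxr_s_ge0 (s : seq nat) (F : nat -> R) : 0 <= \big[Num.max/0]_(k <- s) F k.
Proof. elim: s => [|x s IH]; by rewrite ?big_nil ?big_cons ?le_max ?IH ?orbT. Qed.

End amin.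

Fixpoint Mq (n : nat) : nat :=
  match n with
  | 0 => 0%N
  | n'.+1 => if ((Mq n').+2 ^ 4 <= n'.+1)%N then (Mq n').+1 else Mq n'
  end.

Lemma Mq_inv n : ((Mq n).+1 ^ 4 <= n.+1)%N /\ (n < (Mq n).+2 ^ 4)%N.
Proof.
elim: n => [|n [IH1 IH2]] //=.
case: ifP => h; split.
- exact: leqW.
- have : ((Mq n).+2 ^ 4 < (Mq n).+3 ^ 4)%N.
    by rewrite ltn_exp2r.
  lia.
- lia.
- lia.
Qed.

Lemma Mq_ge K n : ((K.+1) ^ 4 <= n)%N -> (K <= Mq n)%N.
Proof.
move=> h; have [_ h2] := Mq_inv n.
have : (K.+1 ^ 4 < (Mq n).+2 ^ 4)%N by apply: leq_ltn_trans h h2.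
by rewrite ltn_exp2r.
Qed.

Section est.
Context {R : realType}.

Lemma measurable_seq_space d (T : measurableType d) (f : T -> seq_space R) :
  (forall j, measurable_fun [set: T] (fun x => f x j)) -> measurable_fun [set: T] f.
Proof.
move=> mf; apply: (@measurability _ _ _ _ _ _
  (\bigcup_(i in [set: nat]) preimage_set_system [set: seq_space R] (fun x : seq_space R => x i) measurable)).
  by [].
move=> _ [_ [i _ [B mB <-]] <-].
have := mf i measurableT B mB; congr measurable.
by apply/seteqP; split => x /=; rewrite /preimage /=; tauto.
Qed.

Lemma measurable_coord (j : nat) : measurable_fun [set: Cantor] (fun x : Cantor => x j).
Proof.
move=> _ Y mY; apply: sub_sigma_algebra; exists j => //.
by exists Y.
Qed.

Lemma measurable_b2R : measurable_fun [set: bool] (fun b : bool => (b%:R : R)).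
Proof. by move=> _ Y _. Qed.

Lemma measurable_bit n (k : 'I_n) j :
  measurable_fun [set: n.-tuple Cantor] (fun S => ((tnth S k) j)%:R : R).
Proof.
exact: (measurableT_comp measurable_b2R
  (measurableT_comp (measurable_coord j) (measurable_tnth k))).
Qed.

Definition emp n (S : n.-tuple Cantor) (j : nat) : R :=
  (\sum_(y <- S) ((y j)%:R : R)) / n%:R.

Lemma measurable_emp n j : measurable_fun [set: n.-tuple Cantor] (fun S => emp S j).
Proof.
rewrite /emp; apply: measurable_funM; last exact: measurable_cst.
under eq_fun do rewrite big_tuple.
by apply: measurable_sum => k; exact: measurable_bit.
Qed.

Variables (dd : nat -> nat -> R) (jsel : nat -> nat -> nat).

Definition Jlist (m : nat) : seq nat :=
  [seq jsel ab.1 ab.2 | ab <- [seq (a, b) | a <- iota 0 m.+1, b <- iota 0 m.+1]].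

Definition score n m (S : n.-tuple Cantor) (i : nat) : R :=
  \big[Num.max/0]_(j <- Jlist m) `|emp S j - dd i j|.

Definition est n m (S : n.-tuple Cantor) : nat -> R :=
  dd (amin (score m S) m).

Lemma measurable_est n m :
  measurable_fun [set: n.-tuple Cantor] (est m : n.-tuple Cantor -> seq_space R).
Proof.
apply: measurable_seq_space => j; rewrite /est.
apply: (measurable_amin (sc := fun i S => score m S i) (h := fun i _ => dd i j)); last first.
  by move=> i; exact: measurable_cst.
move=> i; apply: measurable_bigmax => k.
apply: measurableT_comp => //; apply: measurable_funB; first exact: measurable_emp.
exact: measurable_cst.
Qed.

End est.

Section det.
Context {R : realType}.

Lemma supdist_ub (p q : nat -> R) j : ((`|p j - q j|)%:E <= supdist p q)%E.
Proof. by apply: ereal_sup_ubound; exists j. Qed.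

Lemma supdist_le (p q : nat -> R) (c : R) : (forall j, `|p j - q j| <= c) ->
  (supdist p q <= c%:E)%E.
Proof. by move=> H; apply: ge_ereal_sup => _ [j _ <-]; rewrite lee_fin. Qed.

Lemma supdist_triangle (p q r : nat -> R) :
  (supdist p r <= supdist p q + supdist q r)%E.
Proof.
apply: ge_ereal_sup => _ [j _ <-].
apply: le_trans (leeD (supdist_ub p q j) (supdist_ub q r j)).
by rewrite -EFinD lee_fin -(subrKA (q j)) ler_normD.
Qed.

Lemma supdist_ge0 (p q : nat -> R) : (0 <= supdist p q)%E.
Proof. by apply: le_trans (supdist_ub p q 0%N). Qed.

Variables (dd : nat -> nat -> R) (jsel : nat -> nat -> nat).
Hypothesis Hsel : forall a b,
  (supdist (dd a) (dd b) <= (2 * `|dd a (jsel a b) - dd b (jsel a b)|)%:E)%E.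

Lemma jsel_in m a b : (a <= m)%N -> (b <= m)%N -> jsel a b \in Jlist jsel m.
Proof.
move=> am bm; apply/mapP; exists (a, b) => //.
by apply/allpairsP; exists (a, b); rewrite !mem_iota /= !add0n !ltnS am bm.
Qed.

Lemma det_bound n m (S : n.-tuple Cantor) (q : nat -> R) (i0 : nat) (eps : R) :
  (i0 <= m)%N -> (supdist (dd i0) q <= eps%:E)%E ->
  (forall j, j \in Jlist jsel m -> `|emp S j - q j| <= eps) ->
  (supdist (est dd jsel m S) q <= (9 * eps)%:E)%E.
Proof.
move=> i0m Hi0 Hemp.
have F1 j : `|dd i0 j - q j| <= eps.
  by rewrite -lee_fin; apply: le_trans Hi0; exact: supdist_ub.
have eps0 : 0 <= eps by apply: le_trans (F1 0%N).
set s := score dd jsel m S.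
have si0 : s i0 <= 2 * eps.
  apply: bigmaxr_s_le => [|j jJ]; first by rewrite mulr_ge0.
  rewrite -(subrKA (q j)) (le_trans (ler_normD _ _))// mulr2n mulrDl mul1r lerD//.
    exact: Hemp.
  by rewrite distrC; exact: F1.
set ih := amin s m.
have sih : s ih <= 2 * eps by apply: le_trans (amin_min _ i0m) si0.
have ihm : (ih <= m)%N by exact: amin_le.
have jin := jsel_in ihm i0m.
set js := jsel ih i0.
have H1 : `|dd ih js - dd i0 js| <= 4 * eps.
  rewrite -(subrKA (emp S js)) (le_trans (ler_normD _ _))//.
  have -> : 4 * eps = 2 * eps + 2 * eps by ring.
  apply: lerD; first rewrite distrC.
    by apply: le_trans sih; exact: (le_bigmaxr_s (fun j => `|emp S j - dd ih j|) jin).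
  by apply: le_trans si0; exact: (le_bigmaxr_s (fun j => `|emp S j - dd i0 j|) jin).
rewrite /est -/s -/ih.
apply: le_trans (supdist_triangle _ (dd i0) _) _.
have -> : 9 * eps = 2 * (4 * eps) + eps by ring.
rewrite EFinD; apply: leeD => //.
by apply: le_trans (Hsel ih i0) _; rewrite lee_fin ler_wpM2l.
Qed.

End det.

Section S.
Context {R : realType}.
Variable mu : probability Cantor R.

Lemma muT : ((mu : {measure set Cantor -> \bar R}) [set: Cantor] = 1)%E.
Proof. exact: probability_setT. Qed.

Local Open Scope ereal_scope.
Lemma int_le_nm (f g : Cantor -> \bar R) : (forall x, 0 <= f x) -> (forall x, f x <= g x) ->
  \int[mu]_x f x <= \int[mu]_x g x.
Proof.
move=> f0 fg.
have g0 : forall x, 0 <= g x by move=> x; exact: le_trans (f0 x) (fg x).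
rewrite !ge0_integralTE//.
apply: ereal_sup_le => _ [h /= hf <-]; exists h => //= x.
exact: le_trans (hf x) (fg x).
Qed.

Lemma iid_ge0 n (f : n.-tuple Cantor -> \bar R) : (forall t, 0 <= f t) -> 0 <= iid_expect mu f.
Proof.
elim: n f => [|n IH] f f0 /=; first exact: f0.
by apply: integral_ge0 => x _; apply: IH.
Qed.

Lemma iid_le n (f g : n.-tuple Cantor -> \bar R) : (forall t, 0 <= f t) ->
  (forall t, f t <= g t) -> iid_expect mu f <= iid_expect mu g.
Proof.
elim: n f g => [|n IH] f g f0 fg /=; first exact: fg.
apply: int_le_nm => x; first by apply: iid_ge0.
by apply: IH.
Qed.

Local Close Scope ereal_scope.
Lemma bdd_int (h : Cantor -> R) (M : R) : measurable_fun [set: Cantor] h ->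
  (forall x, `|h x| <= M) -> mu.-integrable [set: Cantor] (EFin \o h).
Proof.
move=> mh hM; apply: measurable_bounded_integrable => //.
  by rewrite muT ltry.
exists M; split; first by rewrite num_real.
by move=> r Mr x _; apply: le_trans (hM x) (ltW Mr).
Qed.

Variables (I : finType) (g : I -> Cantor -> R).
Hypothesis mg : forall i, measurable_fun [set: Cantor] (g i).
Hypothesis gb : forall i x, `|g i x| <= 1.
Hypothesis g0 : forall i, (\int[mu]_x (g i x)%:E = 0)%E.
Let v i := fine (\int[mu]_x ((g i x)^+2)%:E)%E.

Let ig i : mu.-integrable [set: Cantor] (EFin \o g i).
Proof. exact: (bdd_int (mg i) (gb i)). Qed.

Let ig2 i : mu.-integrable [set: Cantor] (EFin \o (fun x => g i x ^+ 2)).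
Proof.
apply: (@bdd_int _ 1); first exact: measurable_funX.
move=> x; rewrite normrX expr_le1//; exact: gb.
Qed.

Let vE i : (\int[mu]_x ((g i x)^+2)%:E)%E = (v i)%:E.
Proof. by rewrite /v fineK//; apply: integrable_fin_num => //; exact: ig2. Qed.

Lemma int_lin (K : R) (b e : I -> R) :
  (\int[mu]_x (K + \sum_i (b i * g i x + e i * g i x ^+ 2))%:E =
   (K + \sum_i e i * v i)%:E)%E.
Proof.
under eq_integral do rewrite EFinD -sumEFin.
rewrite integralD//; last 2 first.
- by apply: (@bdd_int (fun=> K) `|K|) => //; exact: measurable_cst.
- apply: (@integrable_sum _ _ _ mu _ measurableT _ _ _ (fun i x => (b i * g i x + e i * g i x ^+ 2)%:E)) => i _.
  apply: (@bdd_int (fun x => b i * g i x + e i * g i x ^+ 2) (`|b i| + `|e i|)).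
    by apply: measurable_funD; [apply: measurable_funM|apply: measurable_funM => //; exact: measurable_funX].
  move=> x; apply: le_trans (ler_normD _ _) _; rewrite !normrM.
  apply: lerD; rewrite -[X in _ <= X]mulr1; apply: ler_wpM2l => //.
  by apply: mulr_ile1 => //; exact: gb.
rewrite integral_cst// muT mule1.
rewrite (@integral_sum _ _ _ mu _ measurableT _ (fun i x => (b i * g i x + e i * g i x ^+ 2)%:E)); last first.
  move=> i; apply: (@bdd_int (fun x => b i * g i x + e i * g i x ^+ 2) (`|b i| + `|e i|)).
    by apply: measurable_funD; [apply: measurable_funM|apply: measurable_funM => //; exact: measurable_funX].
  move=> x; apply: le_trans (ler_normD _ _) _; rewrite !normrM.
  apply: lerD; rewrite -[X in _ <= X]mulr1; apply: ler_wpM2l => //.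
  by apply: mulr_ile1 => //; exact: gb.
rewrite EFinD -sumEFin; congr (_ + _)%E; apply: eq_bigr => i _.
under eq_integral do rewrite EFinD !EFinM.
rewrite integralD//; last 2 first.
- exact: integrableZl (ig i).
- exact: integrableZl (ig2 i).
rewrite integralZl//; last exact: ig i.
rewrite integralZl//; last exact: ig2 i.
by rewrite g0 vE mule0 add0e EFinM.
Qed.

Lemma iid_var n : forall (c : R) (w a : I -> R),
  iid_expect mu (fun t : n.-tuple Cantor =>
     (c + \sum_i w i * (a i + \sum_(y <- t) g i y)^+2)%:E) =
  (c + \sum_i w i * (a i ^+ 2 + n%:R * v i))%:E.
Proof.
elim: n => [|n IH] c w a /=.
  congr (EFin (_ + _)); apply: eq_bigr => i _.
  by rewrite big_nil addr0 mul0r addr0.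
transitivity (\int[mu]_x (c + \sum_i w i * ((a i + g i x) ^+ 2 + n%:R * v i))%:E)%E.
  apply: eq_integral => x _; rewrite -IH; congr iid_expect; apply: funext => t.
  congr (EFin (_ + _)); apply: eq_bigr => i _.
  by rewrite big_cons addrA.
transitivity (\int[mu]_x ((c + \sum_i w i * (a i ^+ 2 + n%:R * v i)) +
   \sum_i ((2 * w i * a i) * g i x + w i * g i x ^+ 2))%:E)%E.
  apply: eq_integral => x _; congr EFin; rewrite -addrA; congr (_ + _).
  rewrite -big_split; apply: eq_bigr => i _ /=; ring.
rewrite int_lin; congr EFin; rewrite -addrA; congr (_ + _).
rewrite -big_split; apply: eq_bigr => i _ /=.
rewrite -natr1; ring.
Qed.

End S.

Section prob.
Context {R : realType}.
Variable mu : probability Cantor R.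

Lemma int01 (h : Cantor -> R) : measurable_fun [set: Cantor] h ->
  (forall x, 0 <= h x <= 1) ->
  (\int[mu]_x (h x)%:E)%E = (fine (\int[mu]_x (h x)%:E)%E)%:E /\
  0 <= fine (\int[mu]_x (h x)%:E)%E <= 1.
Proof.
move=> mh h01.
have ih : mu.-integrable [set: Cantor] (EFin \o h).
  apply: (@bdd_int _ mu h 1) => // x; have /andP[h0 h1] := h01 x.
  by rewrite ger0_norm.
have fin : (\int[mu]_x (h x)%:E)%E \is a fin_num by apply: integrable_fin_num.
split; first by rewrite fineK.
have ge0 : (0 <= \int[mu]_x (h x)%:E)%E.
  by apply: integral_ge0 => x _; rewrite lee_fin; case/andP: (h01 x).
have le1 : (\int[mu]_x (h x)%:E <= 1)%E.
  have -> : (1 = \int[mu]_x (cst 1%E) x)%E by rewrite integral_cst// muT mul1e.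
  by apply: int_le_nm => x; rewrite lee_fin; case/andP: (h01 x).
move: ge0 le1 fin; case: (\int[mu]_x (h x)%:E)%E => //= r.
by rewrite !lee_fin => -> ->.
Qed.

Lemma Mean_aux j : (\int[mu]_x (((x j)%:R : R))%:E)%E = (Mean mu j)%:E /\ 0 <= Mean mu j <= 1.
Proof.
apply: int01.
- exact: (measurableT_comp (@measurable_b2R R) (measurable_coord j)).
- by move=> x; case: (x j) => /=; rewrite ?lexx ?ler01.
Qed.

Lemma Mean01 j : 0 <= Mean mu j <= 1.
Proof. by case: (Mean_aux j). Qed.

Lemma MeanE j : (\int[mu]_x (((x j)%:R : R))%:E)%E = (Mean mu j)%:E.
Proof. by case: (Mean_aux j). Qed.

End prob.

Lemma sum_sub_const {R : realType} (T : Type) (s : seq T) (f : T -> R) c :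
  \sum_(y <- s) (f y - c) = \sum_(y <- s) f y - c *+ size s.
Proof.
elim: s => [|y s IH]; first by rewrite !big_nil mulr0n subr0.
by rewrite !big_cons IH /= mulrS; ring.
Qed.

Section prob2.
Context {R : realType}.
Variable mu : probability Cantor R.
Variables (dd : nat -> nat -> R) (jsel : nat -> nat -> nat).
Hypothesis Hsel : forall a b,
  (supdist (dd a) (dd b) <= (2 * `|dd a (jsel a b) - dd b (jsel a b)|)%:E)%E.
Hypothesis Hdd : forall i j, 0 <= dd i j <= 1.

Let q := Mean mu.

Definition gJ (j : nat) (x : Cantor) : R := ((x j)%:R : R) - q j.

Lemma measurable_gJ j : measurable_fun [set: Cantor] (gJ j).
Proof.
apply: measurable_funB; last exact: measurable_cst.
exact: (measurableT_comp (@measurable_b2R R) (measurable_coord j)).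
Qed.

Lemma gJ_bd j x : `|gJ j x| <= 1.
Proof.
rewrite /gJ /q; have /andP[h0 h1] := Mean01 mu j.
rewrite ler_norml; case: (x j) => /=; rewrite ?mulr1n ?mulr0n; apply/andP; split; lra.
Qed.

Lemma gJ_int j : (\int[mu]_x (gJ j x)%:E = 0)%E.
Proof.
rewrite /gJ; under eq_integral do rewrite EFinD.
rewrite integralD//; last 2 first.
- apply: (@bdd_int _ mu (fun x : Cantor => ((x j)%:R : R)) 1).
    exact: (measurableT_comp (@measurable_b2R R) (measurable_coord j)).
  by move=> x; case: (x j) => /=; rewrite ?normr1 ?normr0 ?ler01.
- apply: (@bdd_int _ mu (fun=> - q j) `|q j|); first exact: measurable_cst.
  by move=> x; rewrite normrN.
by rewrite MeanE integral_cst// muT mule1 -EFinD subrr.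
Qed.

Lemma sum_gJ n (S : n.-tuple Cantor) j : (0 < n)%N ->
  \sum_(y <- S) gJ j y = n%:R * (emp S j - q j).
Proof.
move=> n0; rewrite /gJ sum_sub_const size_tuple /emp.
have nz : n%:R != 0 :> R by rewrite pnatr_eq0 -lt0n.
by rewrite -mulr_natr; field.
Qed.

Lemma supdist_le1 (p : nat -> R) : (forall j, 0 <= p j <= 1) -> (supdist p q <= 1%:E)%E.
Proof.
move=> hp; apply: supdist_le => j.
have /andP[a b] := hp j; have /andP[c e] := Mean01 mu j; rewrite /q.
rewrite ler_norml; apply/andP; split; lra.
Qed.

Lemma prob_bound n m i0 eps : (0 < n)%N -> 0 < eps -> (i0 <= m)%N ->
  (supdist (dd i0) q <= eps%:E)%E ->
  (iid_expect mu (fun S : n.-tuple Cantor => supdist (est dd jsel m S) q) <=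
   (9 * eps + (m.+1)%:R ^+ 2 / (n%:R * eps ^+ 2))%:E)%E.
Proof.
move=> n0 eps0 i0m Hi0.
pose I := ('I_m.+1 * 'I_m.+1)%type.
pose gI (ab : I) := gJ (jsel ab.1 ab.2).
pose w (ab : I) := ((n%:R * eps) ^+ 2)^-1.
pose a (ab : I) := 0 : R.
have w0 ab : 0 <= w ab by rewrite /w invr_ge0 sqr_ge0.
apply: (@le_trans _ _ (iid_expect mu (fun S : n.-tuple Cantor =>
    (9 * eps + \sum_i w i * (a i + \sum_(y <- S) gI i y)^+2)%:E))).
  apply: iid_le => [S|S]; first exact: supdist_ge0.
  have sum0 : 0 <= \sum_i w i * (a i + \sum_(y <- S) gI i y)^+2.
    by apply: sumr_ge0 => i _; apply: mulr_ge0 => //; exact: sqr_ge0.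
  have [H|H] := pselect (forall j, j \in Jlist jsel m -> `|emp S j - q j| <= eps).
    apply: le_trans (det_bound Hsel i0m Hi0 H) _.
    by rewrite lee_fin lerDl.
  have [j jJ ltj] : exists2 j, j \in Jlist jsel m & eps < `|emp S j - q j|.
    have [//|H2] := pselect (exists2 j, j \in Jlist jsel m & eps < `|emp S j - q j|).
    exfalso; apply: H => j jJ; rewrite leNgt; apply/negP => ltj.
    by apply: H2; exists j.
  move: jJ => /mapP[[a0 b0]] /allpairsP[[a1 b1] [a1m b1m [-> ->]]] jE.
  rewrite mem_iota add0n in a1m; rewrite mem_iota add0n in b1m.
  simpl in a1m, b1m, jE.
  pose i1 : I := (inord a1, inord b1).
  have gIE : gI i1 = gJ j by rewrite /gI /= !inordK// -jE.
  have Hterm : 1 <= w i1 * (a i1 + \sum_(y <- S) gI i1 y)^+2.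
    rewrite gIE sum_gJ// /a add0r /w.
    have nz : n%:R != 0 :> R by rewrite pnatr_eq0 -lt0n.
    have ez : eps != 0 by rewrite gt_eqF.
    have -> : ((n%:R * eps) ^+ 2)^-1 * (n%:R * (emp S j - q j)) ^+ 2 =
        ((emp S j - q j) / eps) ^+ 2 by field; rewrite nz ez.
    rewrite -real_normK ?num_real//; apply: exprn_ege1.
    by rewrite normf_div (ger0_norm (ltW eps0)) ler_pdivlMr// mul1r ltW.
  apply: le_trans (supdist_le1 (Hdd _)) _.
  rewrite lee_fin; apply: le_trans Hterm _.
  rewrite (bigD1 i1)//= addrCA lerDl; apply: addr_ge0.
    by rewrite mulr_ge0// ltW.
  by apply: sumr_ge0 => i _; apply: mulr_ge0 => //; exact: sqr_ge0.
rewrite (@iid_var _ mu I gI); last 3 first.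
- by move=> i; exact: measurable_gJ.
- by move=> i x; exact: gJ_bd.
- by move=> i; exact: gJ_int.
rewrite lee_fin lerD2l.
apply: (@le_trans _ _ (\sum_(i : I) (w i * n%:R))).
  apply: ler_sum => i _; rewrite /a expr0n /= add0r ler_wpM2l//.
  rewrite -[X in _ <= X]mulr1 ler_wpM2l//.
  have mg2 : measurable_fun [set: Cantor] (fun x => gI i x ^+ 2).
    exact: measurable_funX (measurable_gJ _).
  have b2 : forall x, 0 <= gI i x ^+ 2 <= 1.
    move=> x; rewrite sqr_ge0 /= -real_normK ?num_real// expr_le1//.
    exact: gJ_bd.
  by have [_ /andP[_]] := int01 mu mg2 b2.
rewrite (eq_bigr (fun=> ((n%:R * eps) ^+ 2)^-1 * n%:R))// sumr_const /I card_prod card_ord.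
rewrite -[_ *+ (_ * _)]mulr_natr.
have nz : n%:R != 0 :> R by rewrite pnatr_eq0 -lt0n.
have ez : eps != 0 by rewrite gt_eqF.
rewrite natrM le_eqVlt; apply/orP; left; apply/eqP; field.
by rewrite nz ez.
Qed.

End prob2.

Lemma final_ineq {R : realType} (e : R) (n m K : nat) : 0 < e -> (0 < n)%N ->
  (K <= m)%N -> ((m.+1) ^ 4 <= n.+1)%N ->
  4 / (e * (e / 20) ^+ 2) < K.+1%:R ->
  9 * (e / 20) + m.+1%:R ^+ 2 / (n%:R * (e / 20) ^+ 2) <= e.
Proof.
move=> e0 n0 Km mn hK.
set eps := e / 20.
have eps0 : 0 < eps by rewrite divr_gt0.
set t := e * eps ^+ 2.
have t0 : 0 < t by rewrite mulr_gt0// exprn_gt0.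
set X := m.+1%:R : R; set Y := K.+1%:R : R; set N := n%:R : R.
have Y1 : 1 <= Y by rewrite /Y ler1n.
have YX : Y <= X by rewrite /Y /X ler_nat ltnS.
have N1 : 1 <= N by rewrite /N ler1n.
have X4 : X ^+ 4 <= 2 * N.
  have : ((m.+1 ^ 4)%:R <= (n.+1)%:R :> R) by rewrite ler_nat.
  by rewrite natrX -/X -natr1 -/N; lra.
have hK' : 4 < Y * t by move: hK; rewrite ltr_pdivrMr.
have a : Y <= X ^+ 2 by rewrite expr2; nra.
have b : 4 <= t * X ^+ 2.
  by apply: le_trans (ltW hK') _; rewrite mulrC ler_wpM2l// ltW.
have c : 4 * X ^+ 2 <= t * X ^+ 2 * X ^+ 2.
  by rewrite ler_wpM2r// exprn_ge0// (le_trans ler01).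
have d : t * X ^+ 2 * X ^+ 2 <= t * (2 * N).
  by rewrite -mulrA -exprD ler_wpM2l// ltW.
have h : X ^+ 2 / (N * eps ^+ 2) <= e / 2.
  rewrite ler_pdivrMr; last by rewrite mulr_gt0// ?exprn_gt0// (lt_le_trans ltr01).
  have -> : e / 2 * (N * eps ^+ 2) = t * N / 2 by rewrite /t; field.
  have cd : 4 * X ^+ 2 <= t * (2 * N) by apply: le_trans c d.
  clearbody t X N; nra.
clearbody t X N; rewrite /eps in h *; lra.
Qed.

Theorem theorem2 (R : realType) (Q : set (probability Cantor R)) :
  separable_in_means Q -> UME_learnable Q.
Proof.
move=> sepQ.
have HC : forall k : nat, exists C : set (nat -> R),
    [/\ countable C, C `<=` unit_cube &
      forall mu, Q mu -> exists2 p, C p & (supdist (Mean mu) p < (k.+1%:R^-1)%:E)%E].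
  by move=> k; apply: sepQ; rewrite invr_gt0.
have [Cf HCf] := choice HC.
have HG : forall k : nat, exists g : nat -> nat -> R, Cf k `<=` range g.
  move=> k; have [c _ _] := HCf k.
  have [g gs] := elimT (@pcard_surjP (seq_space R) nat (Cf k) setT) c.
  by exists g => p /gs [l _ <-]; exists l.
have [gf Hgf] := choice HG.
pose dd (i : nat) : nat -> R :=
  match @unpickle (nat * nat)%type i with
  | Some kl => if `[< unit_cube (gf kl.1 kl.2) >] then gf kl.1 kl.2 else fun=> 0
  | None => fun=> 0
  end.
have Hdd : forall i j, 0 <= dd i j <= 1.
  move=> i j; rewrite /dd; case: (unpickle i) => [kl|]; last by rewrite lexx ler01.
  case: asboolP => [H|_]; first exact: H.
  by rewrite lexx ler01.
have dens : forall mu, Q mu -> forall eps : R, 0 < eps ->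
    exists i, (supdist (dd i) (Mean mu) <= eps%:E)%E.
  move=> mu Qmu eps eps0.
  pose k := Num.Def.trunc (eps^-1).
  have hk : k.+1%:R^-1 <= eps.
    rewrite -(invrK eps) lef_pV2 ?posrE ?invr_gt0//.
    exact: ltW (truncnS_gt _).
  have [_ cub cov] := HCf k.
  have [p Cp Hp] := cov mu Qmu.
  have [l _ pE] := Hgf k p Cp.
  exists (pickle (k, l)).
  rewrite /dd pickleK /= pE.
  case: asboolP => [_|]; last by move=> /(_ (cub p Cp)).
  apply: le_trans (ltW (le_lt_trans _ Hp)) _; last by rewrite lee_fin.
  rewrite le_eqVlt; apply/orP; left; apply/eqP.
  rewrite /supdist; congr ereal_sup; apply/seteqP; split => _ [j _ <-];
    by exists j => //; rewrite distrC.
have Hj : forall ab : nat * nat, exists j,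
    (supdist (dd ab.1) (dd ab.2) <= (2 * `|dd ab.1 j - dd ab.2 j|)%:E)%E.
  move=> [a b] /=.
  have s0 := supdist_ge0 (dd a) (dd b).
  have s1 : (supdist (dd a) (dd b) <= 1%:E)%E.
    apply: supdist_le => j; have /andP[? ?] := Hdd a j; have /andP[? ?] := Hdd b j.
    rewrite ler_norml; apply/andP; split; lra.
  move: s0 s1; case E : (supdist (dd a) (dd b)) => [r| |] //= r0 r1.
  rewrite lee_fin in r0.
  have [r00|rpos] := eqVneq r 0.
    by exists 0%N; rewrite r00 lee_fin mulr_ge0.
  have rp : 0 < r by rewrite lt_neqAle eq_sym rpos.
  have : ((r / 2)%:E < supdist (dd a) (dd b))%E.
    by rewrite E lte_fin ltr_pdivrMr// ltr_pMr// ltr1n.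
  move=> /ereal_sup_gt[_ [j _ <-]]; rewrite lte_fin => hj.
  by exists j; rewrite lee_fin; move: hj; lra.
have [js Hjs] := choice Hj.
pose jsel a b := js (a, b).
have Hsel : forall a b,
  (supdist (dd a) (dd b) <= (2 * `|dd a (jsel a b) - dd b (jsel a b)|)%:E)%E.
  by move=> a b; exact: (Hjs (a, b)).
exists (fun n => est dd jsel (Mq n)); split.
- by move=> n; exact: measurable_est.
- by move=> n S j; rewrite /est; exact: Hdd.
- move=> mu Qmu; apply: cvg0_ereal.
    by move=> n; apply: iid_ge0 => S; exact: supdist_ge0.
  move=> e e0.
  pose eps := e / 20.
  have eps0 : 0 < eps by rewrite divr_gt0.
  have [i0 Hi0] := dens mu Qmu eps eps0.
  pose K := maxn i0 (Num.Def.trunc (4 / (e * eps ^+ 2))).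
  exists (maxn 1 (K.+1 ^ 4)) => n Nn.
  have n0 : (0 < n)%N by move: Nn; rewrite geq_max => /andP[].
  have Kn : (K <= Mq n)%N by apply: Mq_ge; move: Nn; rewrite geq_max => /andP[].
  have i0m : (i0 <= Mq n)%N by apply: leq_trans Kn; rewrite leq_maxl.
  apply: le_trans (prob_bound Hsel Hdd n0 eps0 i0m Hi0) _.
  rewrite lee_fin; apply: (@final_ineq _ e n (Mq n) K) => //.
  + by have [] := Mq_inv n.
  + apply: lt_le_trans (truncnS_gt _) _.
    by rewrite ler_nat ltnS leq_maxr.
Qed.
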